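(* Let $T\in\mathbb{B}(\mathscr{H})$ and let $x\in\mathscr{H}$ be a unit vector. Then \[ \left|\langle |T||T^*|x,x\rangle-\langle |T|x,x\rangle\langle |T^*|x,x\rangle\right|\le \||T|x\|\,\||T^*|x\|-|\langle Tx,x\rangle|^{2}. \]
   Context: $\mathbb{B}(\mathscr{H})$ is the algebra of bounded operators on a complex Hilbert space $\mathscr{H}$, and $|T|=(T^*T)^{1/2}$, $|T^*|=(TT^* )^{1/2}$. *)

(* Defs.v *)
From HB Require Import structures.
From mathcomp Require Import all_boot all_order all_algebra.
From mathcomp Require Import complex.
From mathcomp Require Import reals.
Set Implicit Arguments. Unset Strict Implicit. Unset Printing Implicit Defensive.
Import Order.TTheory GRing.Theory Num.Theory.
Local Open Scope ring_scope.

(* Complex Hilbert spaces over the complex numbers C = R[i], R : realType.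
   Inner product: linear in the first argument, conjugate-linear in the second. *)
Section Hilbert.
Variable R : realType.
Local Notation C := (complex R).
Variable V : lmodType C.
Variable ip : V -> V -> C.

Definition hnorm (u : V) : C := sqrtC (ip u u).

Definition is_inner_product : Prop :=
  [/\ (forall (a : C) (u v w : V), ip (a *: u + v) w = a * ip u w + ip v w),
      (forall u v : V, ip v u = (ip u v)^*),
      (forall u : V, 0 <= ip u u) &
      (forall u : V, ip u u = 0 -> u = 0)].

Definition is_complete : Prop :=
  forall u : nat -> V,
    (forall e : C, 0 < e -> exists N : nat, forall m n : nat,
        (N <= m)%N -> (N <= n)%N -> hnorm (u m - u n) < e) ->
    exists l : V, forall e : C, 0 < e -> exists N : nat, forall n : nat,
        (N <= n)%N -> hnorm (u n - l) < e.

Definition is_hilbert : Prop := is_inner_product /\ is_complete.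

Definition bounded_op (T : V -> V) : Prop :=
  (forall (a : C) (u v : V), T (a *: u + v) = a *: T u + T v) /\
  exists M : C, forall v : V, hnorm (T v) <= M * hnorm v.

Definition is_adjoint (T S : V -> V) : Prop :=
  bounded_op S /\ forall u v : V, ip (T u) v = ip u (S v).

Definition positive_op (A : V -> V) : Prop :=
  bounded_op A /\ forall v : V, 0 <= ip (A v) v.

Definition is_pos_sqrt (P A : V -> V) : Prop :=
  positive_op A /\ forall v : V, A (A v) = P v.
End Hilbert.

(* Main.v *)
Require Import Defs.
From HB Require Import structures.
From mathcomp Require Import all_boot all_order all_algebra.
From mathcomp Require Import complex.
From mathcomp Require Import reals.
From mathcomp Require Import ring lra.
Import Order.TTheory GRing.Theory Num.Theory.
Set Implicit Arguments. Unset Strict Implicit. Unset Printing Implicit Defensive.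
Local Open Scope ring_scope.
Section Form.
Variable R : realType.
Local Notation C := R[i].
Local Notation Re := complex.Re.
Local Notation Im := complex.Im.
Local Notation "x %:C" := (real_complex R x) (format "x %:C").

Lemma conjE (a b : R) : ((Complex a b)^* = Complex a (- b)).
Proof. reflexivity. Qed.

Lemma ReD (x y : C) : Re (x + y) = Re x + Re y.
Proof. by case: x; case: y. Qed.
Lemma ReN (x : C) : Re (- x) = - Re x.
Proof. by case: x. Qed.
Lemma ReB (x y : C) : Re (x - y) = Re x - Re y.
Proof. by rewrite ReD ReN. Qed.
Lemma ReMl (r : R) (y : C) : Re (r%:C * y) = r * Re y.
Proof. by case: y => a b /=; rewrite mul0r subr0. Qed.
Lemma ReJ (x : C) : Re (x^*) = Re x.
Proof. by case: x => a b; rewrite conjE. Qed.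
Lemma ReR (r : R) : Re (r%:C) = r. Proof. by []. Qed.
Lemma ge0E (z : C) : 0 <= z -> z = (Re z)%:C.
Proof. case: z => a b; rewrite lecE /= => /andP[/eqP -> _]. by []. Qed.
Lemma ge0Re (z : C) : 0 <= z -> 0 <= Re z.
Proof. case: z => a b; rewrite lecE /= => /andP[_ ->]. by []. Qed.
Lemma conjR (r : R) : (r%:C)^* = r%:C.
Proof. by change ((Complex r 0)^* = Complex r 0); rewrite conjE oppr0. Qed.
Lemma RCD (a b : R) : (a + b)%:C = a%:C + b%:C.
Proof. exact: rmorphD. Qed.
Lemma RCM (a b : R) : (a * b)%:C = a%:C * b%:C.
Proof. exact: rmorphM. Qed.
Lemma RCN (a : R) : (- a)%:C = - a%:C.
Proof. exact: rmorphN. Qed.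
Lemma RC1 : (1 : R)%:C = 1. Proof. by []. Qed.
Lemma RC0 : (0 : R)%:C = 0. Proof. by []. Qed.
Lemma mulJ (z : C) : z * z^* = (Re z ^+ 2 + Im z ^+ 2)%:C.
Proof. by case: z => a b; rewrite /= !expr2; congr Complex; ring. Qed.

Variable U : lmodType C.
Variable ip : U -> U -> C.
Hypothesis ipl : forall a u v w, ip (a *: u + v) w = a * ip u w + ip v w.
Hypothesis iph : forall u v, ip v u = (ip u v)^*.
Hypothesis ipp : forall u, 0 <= ip u u.

Lemma ip0l w : ip 0 w = 0.
Proof. have := ipl 1 0 0 w; rewrite scale1r addr0 mul1r => h. by apply: (addrI (ip 0 w)); rewrite addr0 -h. Qed.
Lemma ipDl u v w : ip (u + v) w = ip u w + ip v w.
Proof. by have := ipl 1 u v w; rewrite scale1r mul1r. Qed.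
Lemma ipZl a u w : ip (a *: u) w = a * ip u w.
Proof. by have := ipl a u 0 w; rewrite addr0 ip0l addr0. Qed.
Lemma ipNl u w : ip (- u) w = - ip u w.
Proof. by rewrite -scaleN1r ipZl mulN1r. Qed.
Lemma ipBl u v w : ip (u - v) w = ip u w - ip v w.
Proof. by rewrite ipDl ipNl. Qed.
Lemma ip0r w : ip w 0 = 0.
Proof. by rewrite iph ip0l conjC0. Qed.
Lemma ipDr u v w : ip w (u + v) = ip w u + ip w v.
Proof. rewrite !(iph _ w) ipDl; exact: rmorphD. Qed.
Lemma ipZr a u w : ip w (a *: u) = a^* * ip w u.
Proof. rewrite !(iph _ w) ipZl; exact: rmorphM. Qed.
Lemma ipNr u w : ip w (- u) = - ip w u.
Proof. rewrite !(iph _ w) ipNl; exact: rmorphN. Qed.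
Lemma ipBr u v w : ip w (u - v) = ip w u - ip w v.
Proof. by rewrite ipDr ipNr. Qed.

Definition Q u := Re (ip u u).
Lemma QE u : ip u u = (Q u)%:C.
Proof. exact: ge0E. Qed.
Lemma Q_ge0 u : 0 <= Q u.
Proof. exact: ge0Re. Qed.
Lemma ReC u v : Re (ip v u) = Re (ip u v).
Proof. by rewrite iph ReJ. Qed.
Lemma QD u v : Q (u + v) = Q u + Q v + 2 * Re (ip u v).
Proof. rewrite /Q ipDl !ipDr !ReD (ReC u v); ring. Qed.
Lemma QB u v : Q (u - v) = Q u + Q v - 2 * Re (ip u v).
Proof. rewrite /Q ipBl !ipBr !ReB (ReC u v); ring. Qed.
Lemma QZ (r : R) u : Q (r%:C *: u) = r ^+ 2 * Q u.
Proof. by rewrite /Q ipZl ipZr conjR mulrA -RCM ReMl expr2. Qed.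
Lemma ReZl (r : R) u v : Re (ip (r%:C *: u) v) = r * Re (ip u v).
Proof. by rewrite ipZl ReMl. Qed.
Lemma ReZr (r : R) u v : Re (ip u (r%:C *: v)) = r * Re (ip u v).
Proof. by rewrite ipZr conjR ReMl. Qed.

Lemma amgm (s : R) u v : 0 < s -> 2 * Re (ip u v) <= s * Q u + Q v / s.
Proof.
move=> s0; have := Q_ge0 (s%:C *: u - v); rewrite QB QZ ReZl => h.
have : 2 * s * Re (ip u v) <= s ^+ 2 * Q u + Q v by lra.
move=> h2; have sn : s != 0 by rewrite gt_eqF.
have -> : s * Q u + Q v / s = s^-1 * (s^+2 * Q u + Q v) by field.
have -> : 2 * Re (ip u v) = s^-1 * (2 * s * Re (ip u v)) by field.
by rewrite ler_wpM2l // invr_ge0 ltW.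
Qed.
End Form.
Section Form2.
Variable R : realType.
Local Notation C := R[i].
Local Notation Re := complex.Re.
Local Notation Im := complex.Im.
Local Notation "x %:C" := (real_complex R x) (format "x %:C").
Variable U : lmodType C.
Variable ip : U -> U -> C.
Hypothesis ipl : forall a u v w, ip (a *: u + v) w = a * ip u w + ip v w.
Hypothesis iph : forall u v, ip v u = (ip u v)^*.
Hypothesis ipp : forall u, 0 <= ip u u.
Local Notation Q := (Q ip).
Let ipDl := ipDl ipl.
Let ipZl := ipZl ipl.
Let ipNl := ipNl ipl.
Let ipBl := ipBl ipl.
Let ipDr := ipDr ipl iph.
Let ipZr := ipZr ipl iph.
Let ipNr := ipNr ipl iph.
Let ipBr := ipBr ipl iph.

Lemma ge0J (z : C) : 0 <= z -> z^* = z.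
Proof. by move=> /ge0E ->; rewrite conjR. Qed.

Section Lin.
Variable A : U -> U.
Hypothesis Al : forall a u v, A (a *: u + v) = a *: A u + A v.
Lemma lin0 : A 0 = 0.
Proof. have := Al 1 0 0; rewrite addr0 !scale1r => h. by apply: (addrI (A 0)); rewrite addr0 -h. Qed.
Lemma linD u v : A (u + v) = A u + A v.
Proof. by have := Al 1 u v; rewrite !scale1r. Qed.
Lemma linZ a u : A (a *: u) = a *: A u.
Proof. by have := Al a u 0; rewrite !addr0 lin0 addr0. Qed.
Lemma linN u : A (- u) = - A u.
Proof. by rewrite -scaleN1r linZ scaleN1r. Qed.
Lemma linB u v : A (u - v) = A u - A v.
Proof. by rewrite linD linN. Qed.
End Lin.

Lemma pos_sa (A : U -> U) :
  (forall a u v, A (a *: u + v) = a *: A u + A v) ->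
  (forall v, 0 <= ip (A v) v) -> forall u v, ip (A u) v = ip u (A v).
Proof.
move=> Al Ap.
pose s u v := ip (A u) v - ip u (A v).
have s0 : forall v, s v v = 0.
  by move=> v; rewrite /s (iph (A v) v) (ge0J (Ap v)) subrr.
have sE : forall c u v, s (u + c *: v) (u + c *: v) =
    s u u + c^* * s u v + c * s v u + c * c^* * s v v.
  move=> c u v; rewrite /s (linD Al) (linZ Al) !ipDl !ipDr !ipZl !ipZr; ring.
move=> u v.
have h1 := sE 1 u v; rewrite conjC1 !s0 in h1.
have h2 := sE 'i u v; rewrite conjCi !s0 in h2.
have e1 : s u v + s v u = 0.
  by move: h1; rewrite !mul1r !addr0 add0r => <-.
have e2 : 'i * (s v u - s u v) = 0.
  by move: h2; rewrite !mulr0 addr0 add0r => /esym <-; ring.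
move/eqP: e2; rewrite mulf_eq0 (negPf (neq0Ci _)) /= subr_eq0 => /eqP e2.
rewrite e2 in e1.
have : 2 * s u v = 0 by rewrite -e1; ring.
move/eqP; rewrite mulf_eq0 pnatr_eq0 /= => /eqP /eqP.
by rewrite subr_eq0 => /eqP.
Qed.

Definition nsq (z : C) := Re z ^+ 2 + Im z ^+ 2.

Lemma amgm1 u v : 2 * Re (ip u v) <= Q u + Q v.
Proof. have := Q_ge0 ipp (u - v); rewrite (QB ipl iph); lra. Qed.
Lemma amgm1N u v : - (2 * Re (ip u v)) <= Q u + Q v.
Proof. have := Q_ge0 ipp (u + v); rewrite (QD ipl iph); lra. Qed.

Lemma CS u v : nsq (ip u v) <= Q u * Q v.
Proof.
set z := ip u v.
have hz : Re (ip u (z *: v)) = nsq z.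
  by rewrite ipZr -/z mulrC mulJ ReR.
have hq : Q (z *: v) = nsq z * Q v.
  rewrite /Q ipZl ipZr mulrA mulJ ReMl //.
have n0 : 0 <= nsq z by rewrite /nsq addr_ge0 // sqr_ge0.
have qu := Q_ge0 ipp u; have qv := Q_ge0 ipp v.
have key : forall s, 0 < s -> 2 * nsq z <= s * Q u + nsq z * Q v / s.
  by move=> s s0; rewrite -hq -hz; apply: (amgm ipl iph ipp).
have [qv0|qv0] := eqVneq (Q v) 0.
  rewrite qv0 mulr0; have [n00|nn0] := eqVneq (nsq z) 0; first by rewrite n00.
  have np : 0 < nsq z by rewrite lt_def nn0 n0.
  have hq1 : 0 < Q u + 1 by lra.
  have := key (nsq z / (Q u + 1)) (divr_gt0 np hq1).
  rewrite qv0 mulr0 mul0r addr0 => h; exfalso.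
  have : nsq z / (Q u + 1) * Q u < nsq z.
    rewrite mulrAC ltr_pdivrMr //; nra.
  lra.
have qvp : 0 < Q v by rewrite lt_def qv0 qv.
have := key (Q v) qvp; rewrite mulfK //; nra.
Qed.
End Form2.
Section Key.
Variable R : realType.
Local Notation C := R[i].
Local Notation Re := complex.Re.
Local Notation Im := complex.Im.
Local Notation "x %:C" := (real_complex R x) (format "x %:C").
Variable U : lmodType C.
Variable ip : U -> U -> C.
Hypothesis ipl : forall a u v w, ip (a *: u + v) w = a * ip u w + ip v w.
Hypothesis iph : forall u v, ip v u = (ip u v)^*.
Hypothesis ipp : forall u, 0 <= ip u u.
Local Notation Q := (Q ip).
Let ipDl := ipDl ipl.
Let ipZl := ipZl ipl.
Let ipNl := ipNl ipl.
Let ipBl := ipBl ipl.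
Let ipDr := ipDr ipl iph.
Let ipZr := ipZr ipl iph.
Let ipNr := ipNr ipl iph.
Let ipBr := ipBr ipl iph.
Let QD := QD ipl iph.
Let QB := QB ipl iph.
Let QZ := QZ ipl iph.
Let ReZl := ReZl ipl.
Let ReZr := ReZr ipl iph.
Let ReC := ReC iph.
Let Qge0 := Q_ge0 ipp.

Lemma posbound (P : U -> U) (K3 : R) :
  (forall a u v, P (a *: u + v) = a *: P u + P v) ->
  (forall u v, ip (P u) v = ip u (P v)) ->
  (forall p, 0 <= Re (ip (P p) p)) ->
  (forall p, Re (ip (P p) p) <= K3 * Q p) -> 0 < K3 ->
  forall p, Q (P p) <= K3 * Re (ip (P p) p).
Proof.
move=> Pl Psa Ppos Pb K3p p.
set q := P p; set t := K3^-1.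
have := Ppos (p - t%:C *: q).
rewrite (linB Pl) (linZ Pl) ipBl !ipBr !ipZl !ipZr conjR !ReB !ReMl.
rewrite -/q (Psa q p) -/q.
have eQ : Re (ip q q) = Q q by [].
rewrite eQ => h.
have hF := Pb q.
move: h hF; set a := Re (ip q p); set b := Re (ip (P q) q); set c := Q q => h hF.
have ht : t * K3 = 1 by rewrite /t mulVf ?gt_eqF.
have t0 : 0 < t by rewrite /t invr_gt0.
have h1 : t * (t * b) <= t * c.
  have e : t * (K3 * c) = c by rewrite mulrA ht mul1r.
  by rewrite -e !ler_pM2l.
have h2 : 0 <= a - t * c by lra.
have h3 : 0 <= K3 * (a - t * c) by apply: mulr_ge0; [apply: ltW|].
move: h3; rewrite mulrBr mulrA (mulrC K3 t) ht mul1r. lra.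
Qed.

Lemma linDf (A B : U -> U) :
  (forall a u v, A (a *: u + v) = a *: A u + A v) ->
  (forall a u v, B (a *: u + v) = a *: B u + B v) ->
  forall a u v, (A (a *: u + v) + B (a *: u + v)) = a *: (A u + B u) + (A v + B v).
Proof. by move=> Al Bl a u v; rewrite Al Bl scalerDr addrACA. Qed.
Lemma linBf (A B : U -> U) :
  (forall a u v, A (a *: u + v) = a *: A u + A v) ->
  (forall a u v, B (a *: u + v) = a *: B u + B v) ->
  forall a u v, (A (a *: u + v) - B (a *: u + v)) = a *: (A u - B u) + (A v - B v).
Proof. by move=> Al Bl a u v; rewrite Al Bl scalerBr opprD addrACA. Qed.
Lemma linS (c : C) : forall a (u v : U), c *: (a *: u + v) = a *: (c *: u) + c *: v.
Proof. by move=> a u v; rewrite scalerDr !scalerA mulrC. Qed.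

Lemma keylemma (Z N : U -> U) (K : R) :
  (forall a u v, Z (a *: u + v) = a *: Z u + Z v) ->
  (forall a u v, N (a *: u + v) = a *: N u + N v) ->
  (forall p, 0 <= ip (Z p) p) ->
  (forall p q, ip (N p) q = ip p (N q)) ->
  (forall p, Z (Z p) = N (N p)) ->
  (forall p, Q (Z p) <= K * Q p) ->
  (forall p, Q (N p) <= K * Q p) ->
  forall p, 0 <= Re (ip (Z p + N p) p).
Proof.
move=> Zl Nl Zp Nsa ZZ KZ KN.
have Zsa := pos_sa ipl iph Zl Zp.
pose W p := Z p + N p.
have Wl : forall a u v, W (a *: u + v) = a *: W u + W v by apply: linDf.
have Wsa : forall u v, ip (W u) v = ip u (W v).
  by move=> u v; rewrite /W ipDl ipDr Zsa Nsa.
pose f p := Re (ip (W p) p).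
set k := `|K|.
have k0 : 0 <= k by rewrite /k normr_ge0.
have KZ' : forall p, Q (Z p) <= k * Q p.
  by move=> p; apply: (le_trans (KZ p)); rewrite ler_wpM2r ?Qge0 ?ler_norm.
have KN' : forall p, Q (N p) <= k * Q p.
  by move=> p; apply: (le_trans (KN p)); rewrite ler_wpM2r ?Qge0 ?ler_norm.
have QW : forall p, Q (W p) <= 4 * (k * Q p).
  move=> p; rewrite /W QD; have := amgm1 ipl iph ipp (Z p) (N p).
  have := KZ' p; have := KN' p; lra.
have fb : forall p, f p <= 2 * (k * Q p) + Q p /\ - f p <= 2 * (k * Q p) + Q p.
  move=> p; have := amgm1 ipl iph ipp (W p) p; have := amgm1N ipl iph ipp (W p) p.
  have := QW p; have := Qge0 p; rewrite /f; lra.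
have fQ0 : forall p, Q p = 0 -> f p = 0.
  move=> p hp; have := fb p; rewrite hp mulr0; lra.
have fZ : forall (r : R) p, f (r%:C *: p) = r ^+ 2 * f p.
  by move=> r p; rewrite /f (linZ Wl) ReZl ReZr mulrA expr2.
have norm : forall p, 0 < Q p -> exists p', Q p' = 1 /\ f p' * Q p = f p.
  move=> p hp; set r := (Num.sqrt (Q p))^-1.
  have hr : r ^+ 2 * Q p = 1.
    by rewrite /r exprVn sqr_sqrtr ?ltW // mulVf ?gt_eqF.
  exists (r%:C *: p); split; first by rewrite QZ.
  by rewrite fZ mulrAC hr mul1r.
change (forall p, 0 <= f p).
move=> p0; case: (lerP 0 (f p0)) => // hneg; exfalso.
have Qp0 : 0 < Q p0.
  rewrite lt_def Qge0 andbT; apply/eqP => h; have := fQ0 _ h; lra.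
have [p1 [hp1 hfp1]] := norm p0 Qp0.
have fp1 : f p1 < 0 by nra.
pose E := (fun x : R => exists p, Q p = 1 /\ x = - f p).
have hsup : classical_sets.has_sup E.
  split; first by exists (- f p1), p1.
  exists (2 * k + 1) => x [p [hp ->]].
  by have := fb p; rewrite hp mulr1; lra.
set M := sup E.
have M1 : - f p1 <= M by apply: sup_upper_bound => //; exists p1.
set m := - M.
have m0 : m < 0 by rewrite /m; lra.
have fact1 : forall p, m * Q p <= f p.
  move=> p; have [h|h] := eqVneq (Q p) 0; first by rewrite h fQ0 // mulr0.
  have hp : 0 < Q p by rewrite lt_def h Qge0.
  have [p' [hp' <-]] := norm p hp.
  have : - f p' <= M by apply: sup_upper_bound => //; exists p'.
  move=> h'; have : 0 <= (f p' - m) * Q p by apply: mulr_ge0; [rewrite /m; lra|apply: ltW].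
  lra.
have fact2 : forall eps, 0 < eps -> exists p, Q p = 1 /\ f p < m + eps.
  move=> eps he; have [x [p [hp ->]] hx] := sup_adherent he hsup.
  by exists p; split => //; move: hx; rewrite -/M /m; lra.
pose P p := W p - m%:C *: p.
have Pl : forall a u v, P (a *: u + v) = a *: P u + P v.
  by apply: linBf => //; apply: linS.
have Psa : forall u v, ip (P u) v = ip u (P v).
  by move=> u v; rewrite /P ipBl ipBr ipZl ipZr conjR Wsa.
have FE : forall p, Re (ip (P p) p) = f p - m * Q p.
  by move=> p; rewrite /P ipBl ReB ipZl ReMl.
set K3 := 2 * k + 1 - m.
have K3p : 0 < K3 by rewrite /K3; lra.
have pb := @posbound P K3 Pl Psa.
have pb' : forall p, Q (P p) <= K3 * Re (ip (P p) p).
  apply: pb => //.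
    by move=> p; rewrite FE; have := fact1 p; lra.
  move=> p; rewrite FE /K3; have := fb p; have := Qge0 p.
  have -> : (2 * k + 1 - m) * Q p = 2 * (k * Q p) + Q p - m * Q p by ring.
  lra.
set d := m * m.
have d0 : 0 < d by rewrite /d; nra.
set k1 := k + 1.
have k10 : 0 < k1 by rewrite /k1; lra.
set s := 2 * k1 / d.
have s0 : 0 < s by rewrite /s divr_gt0 // mulr_gt0.
set eps := d / (2 * (1 + s) * K3).
have eps0 : 0 < eps.
  by rewrite /eps divr_gt0 // mulr_gt0 // mulr_gt0 //; lra.
have [p [hp hfp]] := fact2 eps eps0.
set e := P p.
have Fp : Re (ip (P p) p) < eps by rewrite FE hp mulr1; lra.
have Qe : Q e <= K3 * eps.
  apply: (le_trans (pb' p)); rewrite ler_pM2l //; exact: ltW.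
have Zpe : Z p = e + m%:C *: p - N p.
  by rewrite /e /P /W subrK addrK.
have i1 : Q (Z p) = Q (N p).
  by rewrite /Q -Zsa ZZ Nsa.
have i2 : 0 <= Re (ip (Z p) p) := ge0Re (Zp p).
set g := Re (ip (N p) p).
set r := Re (ip e p).
set h := Re (ip e (N p)).
have e1 : Q (Z p) = Q e + m * m + 2 * (m * r) + Q (N p) - 2 * h - 2 * (m * g).
  rewrite Zpe QB QD QZ hp ReZr ipDl ReD ReZl (ReC (N p) p) -/g -/h -/r.
  rewrite expr2; ring.
have e2 : Re (ip (Z p) p) = r + m - g.
  by rewrite Zpe ipBl ipDl !ReB ReD ReZl -/r -/g; rewrite -/(Q p) hp mulr1.
have e3 : 0 <= (- m) * (r + m - g) by apply: mulr_ge0; lra.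
have e3' : 0 <= - (m * r) - m * m + m * g.
  by move: e3; have -> : (- m) * (r + m - g) = - (m * r) - m * m + m * g by ring.
have hm : d <= Q e - 2 * h by rewrite /d; lra.
have am := amgm ipl iph ipp (- e) (N p) s0.
have Qne : Q (- e) = Q e.
  by rewrite /Q ipNl ipNr opprK.
have Rne : Re (ip (- e) (N p)) = - h by rewrite ipNl ReN.
rewrite Qne Rne in am.
have QNs : Q (N p) / s <= k / s.
  by rewrite ler_pM2r ?invr_gt0 //; have := KN' p; rewrite hp mulr1.
have c1 : (1 + s) * (K3 * eps) = d / 2.
  by rewrite /eps; field; rewrite gt_eqF // gt_eqF //; lra.
have c2 : k / s < d / 2.
  rewrite ltr_pdivrMr // /s.
  have -> : d / 2 * (2 * k1 / d) = k1 by field; rewrite gt_eqF.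
  by rewrite /k1; lra.
have c3 : (1 + s) * Q e <= (1 + s) * (K3 * eps) by rewrite ler_pM2l //; lra.
have : d <= (1 + s) * Q e + k / s.
  have -> : (1 + s) * Q e = Q e + s * Q e by ring.
  lra.
lra.
Qed.
End Key.
Local Notation "x %:C" := (real_complex _ x) (format "x %:C").

Lemma sqrtCR (R : realType) (r : R) : 0 <= r -> sqrtC (r%:C) = (Num.sqrt r)%:C.
Proof.
move=> r0.
have e : r%:C = ((Num.sqrt r)%:C) ^+ 2 by rewrite expr2 -RCM -expr2 sqr_sqrtr.
by rewrite e sqrCK // ler0c sqrtr_ge0.
Qed.

Lemma hnormE (R : realType) (V : lmodType R[i]) (ip : V -> V -> R[i])
  (ipp : forall u, 0 <= ip u u) u : hnorm ip u = (Num.sqrt (Q ip u))%:C.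
Proof. by rewrite /hnorm (QE ipp) sqrtCR // Q_ge0. Qed.

Lemma bnd_of (R : realType) (V : lmodType R[i]) (ip : V -> V -> R[i])
  (ipp : forall u, 0 <= ip u u) (T : V -> V) :
  (exists M, forall v, hnorm ip (T v) <= M * hnorm ip v) ->
  exists K : R, forall v, Q ip (T v) <= K * Q ip v.
Proof.
move=> [M hM].
have [mu hmu] : exists mu : R, `|M| = mu%:C by exists (complex.Re `|M|); apply: ge0E.
exists (mu ^+ 2) => v.
have h := hM v; rewrite !(hnormE ipp) in h.
have h0 : 0 <= M * (Num.sqrt (Q ip v))%:C.
  by apply: le_trans h; rewrite ler0c sqrtr_ge0.
have e : M * (Num.sqrt (Q ip v))%:C = `|M| * (Num.sqrt (Q ip v))%:C.
  by rewrite -(ger0_norm h0) normrM (ger0_norm (x := _%:C)) // ler0c sqrtr_ge0.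
rewrite e hmu -RCM lecR in h.
have mu0 : 0 <= mu by rewrite -ler0c -hmu normr_ge0.
have := ler_pM (sqrtr_ge0 _) (sqrtr_ge0 _) h h.
rewrite -expr2 sqr_sqrtr ?Q_ge0 //.
by rewrite mulrACA -expr2 -expr2 sqr_sqrtr ?Q_ge0.
Qed.

Lemma real_quad (R : realType) (a b N : R) : 0 <= a -> 0 <= b -> 0 <= N ->
  (forall s, 0 <= a + s * s * N * b - 2 * s * N) -> N <= a * b.
Proof.
move=> a0 b0 N0 h.
have [->|Nn0] := eqVneq N 0; first by rewrite mulr_ge0.
have Np : 0 < N by rewrite lt_def Nn0 N0.
have [b00|bn0] := eqVneq b 0.
  exfalso; have := h ((a + 1) / (2 * N)); rewrite b00 mulr0 addr0.
  have -> : 2 * ((a + 1) / (2 * N)) * N = a + 1 by field; rewrite gt_eqF.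
  lra.
have bp : 0 < b by rewrite lt_def bn0 b0.
have := h (b^-1).
have -> : b^-1 * b^-1 * N * b = N / b by field.
have -> : 2 * b^-1 * N = 2 * (N / b) by rewrite mulrAC -mulrA.
move=> h1; have : N / b <= a by lra.
by rewrite ler_pdivrMr // mulrC.
Qed.

Lemma final_real (R : realType) (L al be a b N : R) :
  0 <= L -> 0 <= al -> 0 <= be -> 0 <= a -> 0 <= b ->
  a ^+ 2 <= al ^+ 2 -> b ^+ 2 <= be ^+ 2 -> N <= a * b ->
  L ^+ 2 <= (be ^+ 2 - b ^+ 2) * (al ^+ 2 - a ^+ 2) ->
  L <= al * be - N.
Proof.
move=> L0 al0 be0 a0 b0 ha hb hN hL.
have aa : a <= al by rewrite -(ler_pXn2r (n:=2)) // ?nnegrE.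
have bb : b <= be by rewrite -(ler_pXn2r (n:=2)) // ?nnegrE.
have P0 : a * b <= al * be by apply: ler_pM.
have hP : (be ^+ 2 - b ^+ 2) * (al ^+ 2 - a ^+ 2) <= (al * be - a * b) ^+ 2.
  rewrite -subr_ge0.
  have -> : (al * be - a * b) ^+ 2 - (be ^+ 2 - b ^+ 2) * (al ^+ 2 - a ^+ 2)
      = (al * b - a * be) ^+ 2 by ring.
  exact: sqr_ge0.
have : L <= al * be - a * b.
  rewrite -(ler_pXn2r (n:=2)) ?nnegrE //; [lra|lra].
lra.
Qed.
Section H.
Variable R : realType.
Local Notation C := R[i].
Lemma helper1 (s : R) (z : C) : complex.Re ((-(s%:C * z))^* * z) = -(s * nsq z).
Proof. by case: z => p q; rewrite /nsq /=; ring. Qed.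
Lemma helper2 (s b : R) (z : C) :
  complex.Re ((-(s%:C * z)) * ((-(s%:C * z))^* * b%:C)) = s * s * nsq z * b.
Proof. by case: z => p q; rewrite /nsq /=; ring. Qed.
Lemma RCX (r : R) : (r%:C) ^+ 2 = (r ^+ 2)%:C.
Proof. by rewrite !expr2 RCM. Qed.
Lemma nsqR (a : R) : nsq (a%:C) = a ^+ 2.
Proof. by rewrite /nsq /= expr0n addr0. Qed.
Lemma normE (z : C) : `|z| = (Num.sqrt (nsq z))%:C.
Proof. by rewrite normc_def. Qed.
End H.
Theorem theorem4p1 (R : realType) (V : lmodType (complex R))
  (ip : V -> V -> complex R) (HV : is_hilbert ip)
  (T Tstar absT absTstar : V -> V)
  (HT : bounded_op ip T) (HTstar : is_adjoint ip T Tstar)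
  (HabsT : is_pos_sqrt ip (fun v => Tstar (T v)) absT)
  (HabsTstar : is_pos_sqrt ip (fun v => T (Tstar v)) absTstar)
  (x : V) (hx : hnorm ip x = 1) :
  `| ip (absT (absTstar x)) x - ip (absT x) x * ip (absTstar x) x |
    <= hnorm ip (absT x) * hnorm ip (absTstar x) - `| ip (T x) x | ^+ 2.
Proof.
case: HV => [[ipl iph ipp _] _].
case: HT => [Tl /(bnd_of ipp) [KT hKT]].
case: HTstar => [[Tsl /(bnd_of ipp) [KTs hKTs]] adj].
case: HabsT => [[[Al /(bnd_of ipp) [KA hKA]] Apos] AA].
case: HabsTstar => [[[Bl /(bnd_of ipp) [KB hKB]] Bpos] BB].
set A := absT in Al hKA Apos AA *; set B := absTstar in Bl hKB Bpos BB *.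
have Asa := pos_sa ipl iph Al Apos.
have Bsa := pos_sa ipl iph Bl Bpos.
pose ip2 := fun p q : (V * V)%type => ip p.1 q.1 + ip p.2 q.2.
have ip2l : forall a (u v w : (V * V)%type), ip2 (a *: u + v) w = a * ip2 u w + ip2 v w.
  by move=> a [u1 u2] [v1 v2] [w1 w2]; rewrite /ip2 /= !ipl; ring.
have ip2h : forall u v : (V * V)%type, ip2 v u = (ip2 u v)^*.
  by move=> [u1 u2] [v1 v2]; rewrite /ip2 /= (iph u1 v1) (iph u2 v2); symmetry; exact: rmorphD.
have ip2p : forall u : (V * V)%type, 0 <= ip2 u u.
  by move=> [u1 u2]; rewrite /ip2 /= addr_ge0.
have Q2E : forall p : (V * V)%type, Q ip2 p = Q ip p.1 + Q ip p.2.
  by move=> [u1 u2]; rewrite /Q /ip2 /= ReD.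
pose Z := fun p : (V * V)%type => (A p.1, B p.2).
pose N := fun p : (V * V)%type => (Tstar p.2, T p.1).
set K := `|KA| + `|KB| + `|KT| + `|KTs|.
have bK : forall (K0 : R) (f : V -> V), (forall v, Q ip (f v) <= K0 * Q ip v) ->
    `|K0| <= K -> forall v, Q ip (f v) <= K * Q ip v.
  move=> K0 f hf hK v; apply: (le_trans (hf v)).
  apply: (le_trans (y := `|K0| * Q ip v)); first by rewrite ler_wpM2r ?Q_ge0 ?ler_norm.
  by rewrite ler_wpM2r ?Q_ge0.
have nK : forall z : R, 0 <= `|z| by move=> z; exact: normr_ge0.
have KA' := bK _ _ hKA ltac:(rewrite /K; have := nK KB; have := nK KT; have := nK KTs; lra).
have KB' := bK _ _ hKB ltac:(rewrite /K; have := nK KA; have := nK KT; have := nK KTs; lra).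
have KT' := bK _ _ hKT ltac:(rewrite /K; have := nK KB; have := nK KA; have := nK KTs; lra).
have KTs' := bK _ _ hKTs ltac:(rewrite /K; have := nK KB; have := nK KT; have := nK KA; lra).
have key := @keylemma R (V * V)%type ip2 ip2l ip2h ip2p Z N K.
have key2 : forall y, 0 <= complex.Re (ip (A x + Tstar y) x + ip (B y + T x) y).
  move=> y; apply: (key _ _ _ _ _ _ _ (x, y)).
  - by move=> a [u1 u2] [v1 v2]; rewrite /Z /= Al Bl.
  - by move=> a [u1 u2] [v1 v2]; rewrite /N /= Tl Tsl.
  - by move=> [u1 u2]; rewrite /ip2 /Z /= addr_ge0.
  - move=> [u1 u2] [v1 v2]; rewrite /ip2 /N /= -adj addrC; congr (_ + _).
    by rewrite iph -adj -iph.
  - by move=> [u1 u2]; rewrite /Z /N /= AA BB.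
  - by move=> [u1 u2]; rewrite /Z !Q2E /=; have := KA' u1; have := KB' u2; lra.
  - by move=> [u1 u2]; rewrite /N !Q2E /=; have := KTs' u2; have := KT' u1; lra.
have Qx : Q ip x = 1.
  move: hx; rewrite (hnormE ipp) -RC1 => /complexI h1.
  by rewrite -(sqr_sqrtr (Q_ge0 ipp x)) h1 expr1n.
have ipxx : ip x x = 1 by rewrite (QE ipp) Qx.
set a := complex.Re (ip (A x) x).
have ea : ip (A x) x = a%:C := ge0E (Apos x).
set b := complex.Re (ip (B x) x).
have eb : ip (B x) x = b%:C := ge0E (Bpos x).
have a0 : 0 <= a := ge0Re (Apos x).
have b0 : 0 <= b := ge0Re (Bpos x).
set tau := ip (T x) x.
have hN : nsq tau <= a * b.
  apply: real_quad => //; first by rewrite /nsq addr_ge0 // sqr_ge0.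
  move=> s; have := key2 ((-(s%:C * tau)) *: x).
  rewrite !(ipDl ipl) !ReD (ReC iph x (Tstar _)) -adj (linZ Bl) (ipZl ipl) !(ipZr ipl iph) eb -/tau.
  rewrite helper1 helper2 -/a; lra.
rewrite !(hnormE ipp) Asa ea eb.
set w := ip (B x - b%:C *: x) (A x - a%:C *: x).
have ew : ip (B x) (A x) - a%:C * b%:C = w.
  rewrite /w (ipBl ipl) !(ipBr ipl iph) !(ipZl ipl) !(ipZr ipl iph) conjR eb ipxx.
  rewrite (iph (A x) x) ea conjR; ring.
rewrite ew normE [`|tau|]normE RCX sqr_sqrtr; last first.
  by rewrite /nsq addr_ge0 // sqr_ge0.
rewrite -RCM -RCN -RCD lecR.
have hCS := CS ipl iph ipp (B x - b%:C *: x) (A x - a%:C *: x).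
rewrite -/w !(QB ipl iph) !(QZ ipl iph) !(ReZr ipl iph) eb ea Qx !ReR in hCS.
have ha := CS ipl iph ipp (A x) x; rewrite ea nsqR Qx mulr1 in ha.
have hb := CS ipl iph ipp (B x) x; rewrite eb nsqR Qx mulr1 in hb.
have nw : 0 <= nsq w by rewrite /nsq addr_ge0 // sqr_ge0.
apply: (@final_real R _ _ _ a b) => //; try exact: sqrtr_ge0.
- by rewrite sqr_sqrtr ?Q_ge0.
- by rewrite sqr_sqrtr ?Q_ge0.
- rewrite !sqr_sqrtr ?Q_ge0 //.
  move: hCS; rewrite !mulr1 !expr2; lra.
Qed.
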